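(* Let $\Omega$ be a $\sigma$-compact, locally compact Hausdorff topological space, and let $\mathcal{A}$ be a linear space of continuous real-valued functions on $\Omega$ which contains all constant functions and separates the points of $\Omega$. Then the following conditions are equivalent: (i) for every compact set $K\subset\Omega$ and every constant $C\geq 1$ the set $$\{\omega\in\Omega\mid a(\omega)\leq C\sup_{K}|a| \text{ for all } a\in\mathcal{A}\}$$ is a compact subset of $\Omega$; (ii) there exists a non-negative, continuous, proper function $p\colon\Omega\to[0,\infty)$ such that $p=\sup\{a_\alpha\mid \alpha\in A\}$ pointwise for some symmetric family $(a_\alpha)_{\alpha\in A}$ of functions in $\mathcal{A}$; (iii) there exists a non-negative, proper function $p\colon\Omega\to[0,\infty)$ which is bounded on compact sets and such that $p=\sup\{a_\alpha\mid \alpha\in A\}$ pointwise for some symmetric family $(a_\alpha)_{\alpha\in A}$ of functions in $\mathcal{A}$. Moreover, if these conditions hold, the function $p$ in (ii) can be chosen so that for every compact set $L\subset\Omega$ there are finitely many members $a_{\alpha_1},\dots,a_{\alpha_m}$ of the family with $p=\max\{a_{\alpha_1},\dots,a_{\alpha_m}\}$ on $L$.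
   Context: A function $p\colon\Omega\to Z$ between topological spaces is proper if preimages of compact sets are compact. A family of functions is symmetric if together with each function $a$ it also contains $-a$. For a set $K$ and function $a$, $\sup_K|a|=\sup\{|a(\omega)|\mid\omega\in K\}$. *)

(* Defs.v *)
From HB Require Import structures.
From mathcomp Require Import all_boot all_order all_algebra.
From mathcomp Require Import all_classical all_reals all_analysis.
Set Implicit Arguments. Unset Strict Implicit. Unset Printing Implicit Defensive.
Import Order.TTheory GRing.Theory Num.Theory.
Import numFieldNormedType.Exports.
Local Open Scope classical_set_scope.
Local Open Scope ring_scope.

Definition sigma_compact (T : topologicalType) : Prop :=
  exists K : nat -> set T, (forall n, compact (K n)) /\ \bigcup_n K n = setT.

Definition proper_nonneg (T : topologicalType) (R : realType) (p : T -> R) : Prop :=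
  forall B : set R, B `<=` [set x | 0 <= x] -> compact B -> compact (p @^-1` B).

Definition supabs (T : topologicalType) (R : realType) (K : set T) (a : T -> R) : R :=
  sup [set `|a w| | w in K].

Definition is_pointwise_sup (T : Type) (R : realType) (F : set (T -> R)) (p : T -> R) : Prop :=
  forall w, ((p w)%:E = ereal_sup [set (f w)%:E | f in F])%E.

Definition symmetric_family (T : Type) (R : realType) (F : set (T -> R)) : Prop :=
  forall f, F f -> F (fun w => - f w).

Definition cond_i (T : topologicalType) (R : realType) (A : set (T -> R)) : Prop :=
  forall (K : set T) (C : R), compact K -> 1 <= C ->
    compact [set w | forall a, A a -> a w <= C * supabs K a].

Definition cond_ii (T : topologicalType) (R : realType) (A : set (T -> R)) : Prop :=
  exists (p : T -> R) (F : set (T -> R)),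
    (forall w, 0 <= p w) /\ continuous p /\ proper_nonneg p /\
    F `<=` A /\ symmetric_family F /\ is_pointwise_sup F p.

Definition cond_iii (T : topologicalType) (R : realType) (A : set (T -> R)) : Prop :=
  exists (p : T -> R) (F : set (T -> R)),
    (forall w, 0 <= p w) /\ proper_nonneg p /\
    (forall K : set T, compact K -> exists M : R, forall w, K w -> p w <= M) /\
    F `<=` A /\ symmetric_family F /\ is_pointwise_sup F p.

Definition cond_ii_strong (T : topologicalType) (R : realType) (A : set (T -> R)) : Prop :=
  exists (p : T -> R) (F : set (T -> R)),
    (forall w, 0 <= p w) /\ continuous p /\ proper_nonneg p /\
    F `<=` A /\ symmetric_family F /\ is_pointwise_sup F p /\
    (forall L : set T, compact L ->
       exists (m : nat) (g : 'I_m -> T -> R), (forall k, F (g k)) /\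
         forall w, L w -> ((p w)%:E = \big[maxe/-oo]_(k < m) (g k w)%:E)%E).

(* Main.v *)
Require Import Defs.
From HB Require Import structures.
From mathcomp Require Import all_boot all_order all_algebra.
From mathcomp Require Import all_classical all_reals all_analysis.
Import Order.TTheory GRing.Theory Num.Theory.
Import numFieldNormedType.Exports.
Local Open Scope classical_set_scope.
Local Open Scope ring_scope.

Lemma ps_ge {T : Type} {R : realType} {F : set (T -> R)} {p f} w :
  is_pointwise_sup F p -> F f -> f w <= p w.
Proof.
move=> hp Ff; rewrite -lee_fin (hp w); apply: ereal_sup_ubound; by exists f.
Qed.

Lemma ps_abs {T : Type} {R : realType} {F : set (T -> R)} {p f} w :
  is_pointwise_sup F p -> symmetric_family F -> F f -> `|f w| <= p w.
Proof.
move=> hp hs Ff; rewrite ler_norml (ps_ge w hp Ff : _ <= _) andbT.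
by rewrite lerNl; apply: (ps_ge w hp (hs _ Ff)).
Qed.
Lemma supabs_le {T : topologicalType} {R : realType} (K : set T) (a : T -> R) M :
  0 <= M -> (forall w, K w -> `|a w| <= M) -> supabs K a <= M.
Proof.
move=> M0 hM; rewrite /supabs.
have [->|/set0P[x0 [w Kw _]]] := eqVneq [set `|a w| | w in K] set0.
  by rewrite sup0.
apply: ge_sup; first by exists `|a w|; exists w.
by move=> x [v Kv <-]; apply: hM.
Qed.

Lemma supabs_ge {T : topologicalType} {R : realType} (K : set T) (a : T -> R) M w :
  (forall w, K w -> `|a w| <= M) -> K w -> `|a w| <= supabs K a.
Proof.
move=> hM Kw; apply: ub_le_sup; last by exists w.
by exists M => x [v Kv <-]; apply: hM.
Qed.

Lemma bounded_compact {R : realType} (B : set R) :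
  compact B -> exists M, 0 <= M /\ forall x, B x -> `|x| <= M.
Proof.
move=> /compact_bounded [M0 [_ HM]].
exists (`|M0| + 1); split; first by rewrite addr_ge0.
move=> x Bx; have := HM (`|M0| + 1); rewrite (ltr_pwDr ltr01 (ler_norm M0)).
by move=> /(_ isT x Bx).
Qed.
Lemma hull_closed {T : topologicalType} {R : realType} (A : set (T -> R)) K C :
  (forall a, A a -> continuous a) ->
  closed [set w | forall a, A a -> a w <= C * supabs K a].
Proof.
move=> hcont.
have -> : [set w | forall a, A a -> a w <= C * supabs K a] =
   \bigcap_(a in A) (a @^-1` [set x | x <= C * supabs K a]).
  by apply/seteqP; split => w /= H.
apply: closed_bigI => a Aa; apply: preimage_closed; last exact: closed_le.
by move=> x _; apply: hcont.
Qed.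

Lemma iii_i {T : topologicalType} {R : realType} (A : set (T -> R)) :
  (forall a, A a -> continuous a) -> cond_iii A -> cond_i A.
Proof.
move=> hcont [p [F [p0 [pprop [pbd [FA [Fs Fp]]]]]]] K C cK C1.
have [M HM] := pbd K cK.
pose M' := Num.max M 0.
have M'0 : 0 <= M' by rewrite le_max lexx orbT.
have MM' : M <= M' by rewrite le_max lexx.
have C0 : 0 <= C by apply: le_trans C1.
apply: (subclosed_compact (hull_closed _ K C hcont) (B := p @^-1` `[0, C * M'])).
  apply: pprop; last exact: segment_compact.
  by move=> x /=; rewrite in_itv /= => /andP[].
move=> w Sw /=; rewrite in_itv /= p0 /=.
rewrite -lee_fin (Fp w); apply: ge_ereal_sup => _ [f Ff <-]; rewrite lee_fin.
apply: le_trans (Sw f (FA f Ff)) _; rewrite ler_wpM2l //.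
apply: supabs_le => // v Kv; apply: le_trans (ps_abs v Fp Fs Ff) _.
exact: le_trans (HM v Kv) MM'.
Qed.

Lemma ii_iii {T : topologicalType} {R : realType} (A : set (T -> R)) :
  cond_ii A -> cond_iii A.
Proof.
move=> [p [F [p0 [pc [pprop [FA [Fs Fp]]]]]]].
rewrite /cond_iii; exists p, F; split => //; split => //; split => //.
move=> K cK.
have /bounded_compact [M [_ HM]] : compact (p @` K).
  by apply: continuous_compact => //; apply: continuous_subspaceT.
by exists M => w Kw; apply: le_trans (ler_norm _) (HM _ (ex_intro2 _ _ w Kw erefl)).
Qed.
Definition pT (T : topologicalType) (x : T) : Type := T.
HB.instance Definition _ (T : topologicalType) (x : T) := Topological.copy (pT T x) T.
HB.instance Definition _ (T : topologicalType) (x : T) := isPointed.Build (pT T x) x.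

Lemma cover_compactT {T : topologicalType} (S : set T) (I : choiceType) (D : set I)
  (f : I -> set T) : compact S -> (forall i, D i -> open (f i)) ->
  S `<=` cover D f -> finite_subset_cover D f S.
Proof.
move=> cS fo Sc.
have [->|/set0P[x0 Sx0]] := eqVneq S set0.
  by exists finmap.fset0 => // x [].
have : @compact (pT T x0) S by exact: cS.
by rewrite compact_cover; apply.
Qed.
Fixpoint inl {X : Type} (x : X) (l : seq X) : Prop :=
  match l with [::] => False | y :: l' => x = y \/ inl x l' end.

Lemma inl_cat {X : Type} (x : X) l1 l2 : inl x (l1 ++ l2) <-> inl x l1 \/ inl x l2.
Proof.
elim: l1 => [|y l1 IH] /=; first by split; [right|case].
rewrite IH; split; [case=> [->|[]]|case=> [[->|]|]]; tauto.
Qed.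

Lemma inl_map {X Y : Type} (g : X -> Y) x l : inl x l -> inl (g x) (map g l).
Proof. by elim: l => //= y l IH [->|/IH]; [left|right]. Qed.

Lemma inl_map_inv {X Y : Type} (g : X -> Y) y l :
  inl y (map g l) -> exists x, inl x l /\ y = g x.
Proof.
elim: l => //= x l IH [->|/IH [z [zl ->]]]; first by exists x; split=> //; left.
by exists z; split=> //; right.
Qed.

Lemma inl_mem {X : eqType} (x : X) (l : seq X) : x \in l -> inl x l.
Proof.
by elim: l => //= y l IH; rewrite in_cons => /orP[/eqP->|/IH]; [left|right].
Qed.

Lemma inl_nth {X : Type} (x0 : X) l k : (k < size l)%N -> inl (nth x0 l k) l.
Proof.
by elim: l k => //= y l IH [|k] /=; [left|rewrite ltnS => /IH; right].
Qed.

Definition Rmax {T : Type} {R : realType} (l : seq (T -> R)) (w : T) : R :=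
  foldr (fun f acc => Num.max (f w) acc) 1 l.

Lemma Rmax_ub {T : Type} {R : realType} (l : seq (T -> R)) f w :
  inl f l -> f w <= Rmax l w.
Proof.
elim: l => //= g l IH [->|/IH H]; rewrite le_max ?lexx //.
by rewrite H orbT.
Qed.

Lemma Rmax_ge1 {T : Type} {R : realType} (l : seq (T -> R)) w : 1 <= Rmax l w.
Proof. by elim: l => //= g l IH; rewrite le_max IH orbT. Qed.

Lemma Rmax_attain {T : Type} {R : realType} (l : seq (T -> R)) w :
  Rmax l w = 1 \/ exists f, inl f l /\ Rmax l w = f w.
Proof.
elim: l => [|g l IH] /=; first by left.
case: (leP (g w) (Rmax l w)) => H.
  case: IH => [->|[f [fl ->]]]; first by left.
  by right; exists f; split=> //; right.
by right; exists g; split=> //; left.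
Qed.

Lemma Rmax_cont {T : topologicalType} {R : realType} (l : seq (T -> R)) :
  (forall f, inl f l -> continuous f) -> continuous (Rmax l).
Proof.
elim: l => [|g l IH] H /=; first by move=> x; apply: cvg_cst.
move=> x; apply: (@continuous_max _ _ g (Rmax l) x).
  by apply: H; left.
by apply: IH => f fl; apply: H; right.
Qed.

Definition Emax {T : Type} {R : realType} (l : seq (T -> R)) (w : T) : \bar R :=
  \big[maxe/-oo%E]_(f <- l) (f w)%:E.

Lemma Emax_ub {T : Type} {R : realType} (l : seq (T -> R)) f w :
  inl f l -> ((f w)%:E <= Emax l w)%E.
Proof.
rewrite /Emax; elim: l => //= g l IH [->|/IH H]; rewrite big_cons le_max ?lexx //.
by rewrite H orbT.
Qed.

Lemma Emax_attain {T : Type} {R : realType} (l : seq (T -> R)) w :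
  l <> [::] -> exists f, inl f l /\ Emax l w = (f w)%:E.
Proof.
rewrite /Emax; elim: l => [//|g l IH] _; rewrite big_cons.
case: l IH => [|h l] IH.
  by exists g; split; [left|rewrite big_nil; apply/max_idPl; exact: leNye].
have [//|f [fl ->]] := IH.
case: (leP (g w)%:E (f w)%:E) => H.
  by exists f; split=> //; right.
by exists g; split=> //; left.
Qed.

Lemma Emax_ord {T : Type} {R : realType} (l : seq (T -> R)) w :
  \big[maxe/-oo%E]_(k < size l) (nth (fun _ => 0) l k w)%:E = Emax l w.
Proof. by rewrite /Emax (big_nth (fun _ => 0)) big_mkord. Qed.
Lemma cont_bound {T : topologicalType} {R : realType} {a : T -> R} {K} :
  continuous a -> compact K -> exists M, forall w, K w -> `|a w| <= M.
Proof.
move=> ca cK.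
have /bounded_compact [M [_ HM]] : compact (a @` K).
  by apply: continuous_compact => //; apply: continuous_subspaceT.
by exists M => w Kw; apply: HM; exists w.
Qed.

Lemma supabs_ge' {T : topologicalType} {R : realType} {K : set T} {a : T -> R} {w} :
  continuous a -> compact K -> K w -> `|a w| <= supabs K a.
Proof. by move=> ca cK Kw; have [M HM] := cont_bound ca cK; apply: (supabs_ge _ _ M). Qed.

Lemma supabs_ge0 {T : topologicalType} {R : realType} (K : set T) (a : T -> R) :
  continuous a -> compact K -> 0 <= supabs K a.
Proof.
move=> ca cK; rewrite /supabs.
have [->|/set0P[x0 [w Kw _]]] := eqVneq [set `|a w| | w in K] set0.
  by rewrite sup0.
rewrite -/(supabs K a); exact: le_trans (normr_ge0 _) (supabs_ge' ca cK Kw).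
Qed.

Lemma compact_nbhd {T : topologicalType} : locally_compact [set: T] ->
  forall S : set T, compact S -> exists L, compact L /\ S `<=` L°.
Proof.
move=> hloc S cS.
have : forall x : T, exists U : set T, nbhs x U /\ compact U.
  move=> x; have [U nU [cU _]] := hloc x I.
  by exists U; split=> //; move: nU; rewrite withinET.
move=> /choice [U HU].
have [] := @cover_compactT T S T S (fun x => (U x)°) cS.
- by move=> i _; apply: open_interior.
- by move=> x Sx; exists x => //; exact: (HU x).1.
move=> D' _ SD'.
exists (\big[setU/set0]_(i <- finmap.enum_fset D') U i); split.
  by apply: bigsetU_compact => i _; apply: (HU i).2.
move=> x /SD' [i /= iD' Uix]; apply: (interiorS _ Uix) => y Uy.
by rewrite -bigcup_seq; exists i.
Qed.
Definition hull {T : topologicalType} {R : realType} (A : set (T -> R)) (K : set T) (C : R) :=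
  [set w | forall a, A a -> a w <= C * supabs K a].

Lemma K_sub_hull {T : topologicalType} {R : realType} (A : set (T -> R)) K C :
  (forall a, A a -> continuous a) -> compact K -> 1 <= C -> K `<=` hull A K C.
Proof.
move=> hcont cK C1 v Kv a Aa.
apply: le_trans (ler_norm _) _; apply: le_trans (supabs_ge' (hcont a Aa) cK Kv) _.
by apply: ler_peMl => //; apply: supabs_ge0 => //; apply: hcont.
Qed.

Lemma exists_L {T : topologicalType} {R : realType} (A : set (T -> R)) :
  (forall a, A a -> continuous a) -> locally_compact [set: T] ->
  sigma_compact T -> cond_i A ->
  exists L : nat -> set T, (forall n, compact (L n)) /\
    (forall n, hull A (L n) n.+2%:R `<=` (L n.+1)°) /\
    (forall n, L n `<=` (L n.+1)°) /\ (forall w, exists n, L n w).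
Proof.
move=> hcont hloc [Ks [cKs Kcov]] hi.
have : forall S : set T, exists L, compact S -> compact L /\ S `<=` L°.
  move=> S; case: (pselect (compact S)) => cS.
    by have [L HL] := compact_nbhd hloc S cS; exists L.
  by exists set0 => /cS.
move=> /choice [N HN].
pose L := fix L n := if n is m.+1 then N (hull A (L m) m.+2%:R `|` Ks m) else set0.
have cH : forall n, compact (L n) -> compact (hull A (L n) n.+2%:R `|` Ks n).
  by move=> n cn; apply: compactU => //; apply: hi => //; rewrite ler1n.
have cL : forall n, compact (L n).
  by elim => [|n IH]; [exact: compact0|exact: (HN _ (cH n IH)).1].
exists L; split=> //; split.
  by move=> n w hw; apply: (HN _ (cH n (cL n))).2; left.
split.
  move=> n w hw; apply: (HN _ (cH n (cL n))).2; left.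
  by apply: K_sub_hull => //; rewrite ler1n.
move=> w; have : [set: T] w by [].
rewrite -Kcov => -[n _ Kw]; exists n.+1; apply: interior_subset.
by apply: (HN _ (cH n (cL n))).2; right.
Qed.
Lemma point_fun {T : topologicalType} {R : realType} (A : set (T -> R))
  (hcont : forall a, A a -> continuous a)
  (hscal : forall (c : R) a, A a -> A (fun w => c * a w))
  (hconst : forall c : R, A (fun _ => c)) (K S : set T) (m : nat) :
  compact K -> (forall w, S w -> ~ hull A K m.+2%:R w) ->
  forall w, exists b, A b /\ (forall v, K v -> `|b v| <= 1) /\
     (S w -> m.+1%:R < b w).
Proof.
move=> cK hS w; case: (pselect (S w)) => Sw; last first.
  by exists (fun _ => 0); split=> //; split=> // v _; rewrite normr0.
set C : R := m.+2%:R.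
have [a [Aa lt]] : exists a, A a /\ C * supabs K a < a w.
  apply: contrapT => H; apply: (hS w Sw) => a Aa; rewrite leNgt; apply/negP => lt.
  by apply: H; exists a.
have s0 : 0 <= supabs K a by apply: supabs_ge0 => //; apply: hcont.
have C0 : 0 < C by rewrite ltr0n.
have aw0 : 0 < a w by apply: le_lt_trans lt; apply: mulr_ge0 => //; apply: ltW.
exists (fun v => (C / a w) * a v); split; first exact: hscal.
split.
  move=> v Kv; rewrite normrM ger0_norm; last by apply: divr_ge0; apply: ltW.
  apply: le_trans (_ : C / a w * supabs K a <= 1).
    apply: ler_wpM2l; first by apply: divr_ge0; apply: ltW.
    exact: supabs_ge' (hcont a Aa) cK Kv.
  by rewrite mulrAC ler_pdivrMr // mul1r ltW.
move=> _; rewrite divfK ?gt_eqF // /C ltr_nat.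
by [].
Qed.
Lemma exists_B {T : topologicalType} {R : realType} (A : set (T -> R))
  (hcont : forall a, A a -> continuous a)
  (hscal : forall (c : R) a, A a -> A (fun w => c * a w))
  (hconst : forall c : R, A (fun _ => c)) (L : nat -> set T) :
  (forall n, compact (L n)) ->
  (forall n, hull A (L n) n.+2%:R `<=` (L n.+1)°) ->
  exists B : nat -> seq (T -> R),
  (forall n b, inl b (B n) -> A b) /\
  (forall n b w, inl b (B n.+1) -> L n w -> `|b w| <= 1) /\
  (forall n w, L n.+1 w -> ~ (L n)° w -> exists b, inl b (B n) /\ n%:R < b w) /\
  (forall n, inl (fun _ => 1) (B n)).
Proof.
move=> cL hH.
suff : forall n, exists l : seq (T -> R),
  (forall b, inl b l -> A b) /\
  (forall m, n = m.+1 -> forall b w, inl b l -> L m w -> `|b w| <= 1) /\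
  (forall w, L n.+1 w -> ~ (L n)° w -> exists b, inl b l /\ n%:R < b w) /\
  inl (fun _ => 1) l.
  move=> /choice [B HB]; exists B; split; first by move=> n; apply: (HB n).1.
  split; first by move=> n; apply: (HB n.+1).2.1.
  by split=> n; [apply: (HB n).2.2.1|apply: (HB n).2.2.2].
case=> [|m].
  exists [:: fun _ => 1]; split; first by move=> b [->|].
  split; first by [].
  by split; [move=> w _ _; exists (fun _ => 1); split; [left|rewrite ltr01]|left].
set S := L m.+2 `&` ~` (L m.+1)°.
have hS : forall w, S w -> ~ hull A (L m) m.+2%:R w.
  by move=> w [_ nw] /hH.
have /choice [bw Hbw] := point_fun A hcont hscal hconst (L m) S m (cL m) hS.
have cS : compact S.
  by apply: compact_closedI => //; apply: open_closedC; apply: open_interior.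
have [] := @cover_compactT T S T S (fun w => [set v | m.+1%:R < bw w v]) cS.
- move=> i _; apply: (@open_comp _ _ (bw i) [set x | m.+1%:R < x]); last exact: open_gt.
  by move=> x _; apply: (hcont _ (Hbw i).1).
- by move=> w Sw; exists w => //; apply: (Hbw w).2.2.
move=> D' _ SD'.
exists ((fun _ => 1) :: map bw (finmap.enum_fset D')); split.
  by move=> b [->|/(inl_map_inv bw) [x [_ ->]]]; [apply: hconst|apply: (Hbw x).1].
split.
  move=> m' [<-] b w [->|/(inl_map_inv bw) [x [_ ->]]] Lw; first by rewrite normr1.
  by apply: (Hbw x).2.1.
split; last by left.
move=> w Lw nLw; have /SD' [i iD' bi] : S w by split.
by exists (bw i); split=> //; right; apply: inl_map; apply: inl_mem.
Qed.
Definition Gl {T : Type} {R : realType} (B : nat -> seq (T -> R)) k :=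
  B k ++ map (fun b v => - b v) (B k).

Fixpoint Lst {T : Type} {R : realType} (B : nat -> seq (T -> R)) m :=
  if m is m'.+1 then Gl B m ++ Lst B m' else Gl B 0.

Lemma inl_Lst {T : Type} {R : realType} (B : nat -> seq (T -> R)) f k m :
  inl f (Gl B k) -> (k <= m)%N -> inl f (Lst B m).
Proof.
move=> fk; elim: m => [|m IH].
  by rewrite leqn0; move/eqP => kE; rewrite /= -kE.
rewrite leq_eqVlt; case/orP => [/eqP kE|km] /=; apply/inl_cat.
  by left; rewrite -kE.
by right; apply: IH.
Qed.

Lemma Lst_Gl {T : Type} {R : realType} (B : nat -> seq (T -> R)) f m :
  inl f (Lst B m) -> exists k, inl f (Gl B k).
Proof.
elim: m => [|m IH] /=; first by exists 0.
by move=> /inl_cat [H|/IH //]; exists m.+1.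
Qed.

Lemma find_k {T : topologicalType} (L : nat -> set T) w :
  (forall n, L n `<=` (L n.+1)°) ->
  forall d k, ~ (L k)° w -> (L (k + d)%N)° w ->
  exists k', (k <= k')%N /\ ~ (L k')° w /\ L k'.+1 w.
Proof.
move=> hLi; elim=> [|d IH] k nk; first by rewrite addn0 => /nk.
case: (pselect ((L k.+1)° w)) => H.
  by move=> _; exists k; split=> //; split=> //; apply: interior_subset.
rewrite addnS -addSn; move/(IH _ H) => [k' [kk' rest]]; exists k'; split=> //.
exact: ltnW.
Qed.

Lemma foldr_maxn_ub (s : seq nat) k : k \in s -> (k <= foldr maxn 0 s)%N.
Proof.
elim: s => //= x s IH; rewrite in_cons => /orP[/eqP->|/IH H].
  by rewrite leq_maxl.
by rewrite (leq_trans H) // leq_maxr.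
Qed.
Lemma i_ii_strong {T : topologicalType} {R : realType} (A : set (T -> R))
  (hcont : forall a, A a -> continuous a)
  (hscal : forall (c : R) a, A a -> A (fun w => c * a w))
  (hconst : forall c : R, A (fun _ => c)) :
  locally_compact [set: T] -> sigma_compact T -> cond_i A -> cond_ii_strong A.
Proof.
move=> hloc hsig hi.
have [L [cL [hH [hLi Lcov]]]] := exists_L A hcont hloc hsig hi.
have [B [BA [Bb [B3 B1]]]] := exists_B A hcont hscal hconst L cL hH.
have Lmono : forall a b, (a <= b)%N -> L a `<=` L b.
  move=> a b /subnK <-; elim: (b - a)%N => //= d IH w /IH Lw.
  by rewrite addSn; apply: interior_subset; apply: hLi.
pose F := [set f | exists k, inl f (Gl B k)].
have F1 : F (fun _ => 1) by exists 0; apply/inl_cat; left; apply: B1.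
have FA : F `<=` A.
  move=> f [k /inl_cat [/BA //|/(inl_map_inv (fun b v => - b v)) [b [bB ->]]]].
  have -> : (fun v => - b v) = (fun v => -1 * b v).
    by apply: funext => v; rewrite mulN1r.
  by apply: hscal; apply: BA bB.
have Fs : symmetric_family F.
  move=> f [k /inl_cat [fB|/(inl_map_inv (fun b v => - b v)) [b [bB ->]]]].
    by exists k; apply/inl_cat; right; apply: (inl_map (fun b v => - b v)).
  have -> : (fun w => - - b w) = b by apply: funext => v; rewrite opprK.
  by exists k; apply/inl_cat; left.
have Fl : forall m f, inl f (Lst B m) -> F f.
  by move=> m f /Lst_Gl.
have loc : forall m w, L m w -> forall f, F f -> f w <= Rmax (Lst B m) w.
  move=> m w Lw f [k fk]; case: (leqP k m) => km.
    by apply: Rmax_ub; apply: inl_Lst fk km.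
  apply: le_trans (Rmax_ge1 _ _).
  case: k km fk => // k km fk.
  have Lkw : L k w by apply: (Lmono m) => //.
  move: fk => /inl_cat [fB|/(inl_map_inv (fun b v => - b v)) [b [bB ->]]].
    exact: le_trans (ler_norm _) (Bb k f w fB Lkw).
  by apply: le_trans (ler_norm (- b w)) _; rewrite normrN; apply: Bb bB Lkw.
have att : forall m w, exists f, F f /\ f w = Rmax (Lst B m) w.
  move=> m w; case: (Rmax_attain (Lst B m) w) => [->|[f [fl ->]]].
    by exists (fun _ => 1).
  by exists f; split=> //; apply: Fl fl.
have supE : forall m w, L m w ->
    ereal_sup [set (f w)%:E | f in F] = (Rmax (Lst B m) w)%:E.
  move=> m w Lw; apply: le_anti; apply/andP; split.
    by apply: ge_ereal_sup => _ [f Ff <-]; rewrite lee_fin; apply: loc.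
  by have [f [Ff <-]] := att m w; apply: ereal_sup_ubound; exists f.
pose p w := fine (ereal_sup [set (f w)%:E | f in F]).
have pE : forall m w, L m w -> p w = Rmax (Lst B m) w.
  by move=> m w Lw; rewrite /p (supE m w Lw).
have Fp : is_pointwise_sup F p.
  by move=> w; have [m Lw] := Lcov w; rewrite (pE m w Lw) (supE m w Lw).
have p1 : forall w, 1 <= p w by move=> w; apply: (ps_ge w Fp F1).
have Rc : forall m, continuous (Rmax (Lst B m)).
  by move=> m; apply: Rmax_cont => f fl; apply: hcont; apply: FA; apply: Fl fl.
have pc : continuous p.
  move=> x; have [j Lx] := Lcov x.
  have eq : {near x, Rmax (Lst B j.+1) =1 p}.
    by apply: filterS (hLi j x Lx) => w Lw; rewrite (pE _ _ Lw).
  have Lx1 : L j.+1 x by apply: interior_subset; apply: hLi.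
  apply: cvg_trans (near_eq_cvg eq) _.
  by rewrite (pE _ _ Lx1); apply: Rc.
have pbig : forall n w, ~ (L n)° w -> n%:R <= p w.
  move=> n w nw; have [j Lw] := Lcov w.
  have Lj1 : (L (j.+1))° w by apply: hLi.
  have nj : (n <= j.+1)%N.
    rewrite leqNgt; apply/negP => jn; apply: nw.
    by move: Lj1; apply: interiorS; apply: Lmono; apply: ltnW.
  have Lnd : (L (n + (j.+1 - n))%N)° w by rewrite subnKC.
  have [k' [nk' [nk'w Lk'w]]] := find_k L w hLi (j.+1 - n)%N n nw Lnd.
  have [b [bB bw]] := B3 k' w Lk'w nk'w.
  have Fb : F b by exists k'; apply/inl_cat; left.
  apply: (@le_trans _ _ k'%:R); first by rewrite ler_nat.
  exact: le_trans (ltW bw) (ps_ge w Fp Fb).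
exists p, F; split; first by move=> w; apply: le_trans ler01 (p1 w).
split=> //; split.
  move=> Bs Bpos cB; have [M [M0 HM]] := bounded_compact Bs cB.
  pose n := (Num.trunc M).+1.
  apply: (subclosed_compact _ (cL n)).
    apply: preimage_closed; first by move=> x _; apply: pc.
    exact: compact_closed (@Rhausdorff R) cB.
  move=> w /= Bw; apply: interior_subset; apply: contrapT => nw.
  have h2 := pbig n w nw; have h1 := HM _ Bw.
  have := lt_le_trans (le_lt_trans (le_trans (ler_norm _) h1) (truncnS_gt M)) h2.
  by rewrite ltxx.
split=> //; split=> //; split=> //.
move=> L' cL'.
have [] := @cover_compactT T L' nat setT (fun k => (L k)°) cL'.
- by move=> k _; apply: open_interior.
- by move=> w _; have [j Lw] := Lcov w; exists j.+1 => //; apply: hLi.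
move=> D' _ SD'.
pose m := foldr maxn 0 (finmap.enum_fset D').
have L'm : L' `<=` L m.
  move=> w /SD' [k kD' Lkw]; apply: (Lmono k m); last exact: interior_subset.
  exact: foldr_maxn_ub.
exists (size (Lst B m)), (fun k => nth (fun _ => 0) (Lst B m) k); split.
  by move=> k; apply: (Fl m); apply: inl_nth.
move=> w L'w; rewrite Emax_ord (pE m w (L'm w L'w)).
have one : inl (fun _ => 1) (Lst B m).
  by apply: (@inl_Lst _ _ _ _ 0) => //; apply/inl_cat; left.
apply: le_anti; apply/andP; split.
  case: (Rmax_attain (Lst B m) w) => [->|[f [fl ->]]].
    exact: (Emax_ub _ _ w one).
  exact: Emax_ub.
have [|f [fl ->]] := Emax_attain (Lst B m) w.
  by move=> E; rewrite E in one.
by rewrite lee_fin; apply: Rmax_ub.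
Qed.
Lemma strong_ii {T : topologicalType} {R : realType} (A : set (T -> R)) :
  cond_ii_strong A -> cond_ii A.
Proof.
move=> [p [F [h1 [h2 [h3 [h4 [h5 [h6 _]]]]]]]].
by exists p, F.
Qed.

Theorem mainTheorem1 (R : realType) (Omega : topologicalType) (A : set (Omega -> R))
  (hHaus : hausdorff_space Omega)
  (hloc : locally_compact [set: Omega])
  (hsig : sigma_compact Omega)
  (hcont : forall a, A a -> continuous a)
  (hadd : forall a b, A a -> A b -> A (fun w => a w + b w))
  (hscal : forall (c : R) a, A a -> A (fun w => c * a w))
  (hconst : forall c : R, A (fun _ => c))
  (hsep : forall x y : Omega, x <> y -> exists a, A a /\ a x <> a y) :
  (cond_i A <-> cond_ii A) /\ (cond_ii A <-> cond_iii A) /\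
  (cond_i A -> cond_ii_strong A).
Proof.
have hs : cond_i A -> cond_ii_strong A by exact: (i_ii_strong A hcont hscal hconst hloc hsig).
split; first by split=> [/hs/strong_ii //|/ii_iii/(iii_i A hcont)].
split; last by [].
split; first exact: ii_iii.
by move=> /(iii_i A hcont)/hs/strong_ii.
Qed.
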